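(* For every integer $n\ge1$, $$\sum_{d\mid n,\ d'\mid n} c_d\Big(\frac{n}{d'}\Big)c_{d'}\Big(\frac{n}{d}\Big)=n\,\tau(n),$$ where the sum runs over all ordered pairs $(d,d')$ of positive divisors of $n$.
   Context: For integers $m\ge1$ and $x$, the Ramanujan sum is $c_m(x)=\sum_{1\le j\le m,\ (j,m)=1} e^{2\pi i jx/m}$. $\tau(n)$ is the number of positive divisors of $n$. *)

(* Defs.v *)
From mathcomp Require Import all_boot all_order all_algebra all_field.
Set Implicit Arguments. Unset Strict Implicit. Unset Printing Implicit Defensive.
Import Order.TTheory GRing.Theory Num.Theory.
Local Open Scope ring_scope.

(* zeta m = exp(2 pi i / m) in algC: m.-root (-1) is the m-th root of -1 with
   minimal nonnegative argument, i.e. exp(i pi / m). *)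
Definition zeta (m : nat) : algC := (m.-root (-1)) ^+ 2.

Definition ramanujan (m : nat) (x : int) : algC :=
  \sum_(1 <= j < m.+1 | coprime j m) zeta m ^ (j%:Z * x).

Definition tau (n : nat) : nat := size (divisors n).

(* Main.v *)
Require Import Defs.
From mathcomp Require Import all_boot all_order all_algebra all_field.
From mathcomp Require Import ring lra.
Set Implicit Arguments. Unset Strict Implicit. Unset Printing Implicit Defensive.
Import Order.TTheory GRing.Theory Num.Theory.
Local Open Scope ring_scope.

Lemma sq_le (R : realFieldType) (a b : R) : 0 <= a -> 0 <= b -> a^+2 <= b^+2 -> a <= b.
Proof. move=> ha hb h. nra. Qed.
Lemma D_real (R : realFieldType) (x1 y1 x2 y2 : R) :
  x1^+2+y1^+2 = 1 -> x2^+2+y2^+2 = 1 -> 0 <= y1 -> 0 <= y2 -> x2 < 1 -> x1 <= x2 ->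
  0 <= y1*x2 - x1*y2 /\ x1 < x1*x2 + y1*y2.
Proof.
move=> e1 e2 hy1 hy2 hx2 hx.
have [hx1|hx1] := lerP 0 x1.
  have hyy : y2 <= y1 by apply: sq_le => //; nra.
  split; first nra.
  have : y2^+2 <= y1 * y2 by nra.
  nra.
split; last nra.
have [hx2'|hx2'] := lerP 0 x2; first nra.
have hyy : y1 <= y2 by apply: sq_le => //; nra.
nra.
Qed.



Lemma D_C (a g : algC) : `|a| = 1 -> `|g| = 1 -> 0 <= 'Im a -> 0 <= 'Im g ->
  'Re g < 1 -> 'Re a <= 'Re g ->
  0 <= 'Im (a * g^*) /\ 'Re a < 'Re (a * g^*).
Proof.
move=> na ng ia ig g1 ag.
rewrite ImM ReM Re_conj Im_conj.
pose x1 := in_algR (Creal_Re a). pose y1 := in_algR (Creal_Im a).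
pose x2 := in_algR (Creal_Re g). pose y2 := in_algR (Creal_Im g).
have := @D_real _ x1 y1 x2 y2.
have e1 : x1^+2 + y1^+2 = 1.
  by apply: val_inj; rewrite /= -!expr2 -normC2_Re_Im ?na ?ng expr1n.
have e2 : x2^+2 + y2^+2 = 1.
  by apply: val_inj; rewrite /= -!expr2 -normC2_Re_Im ?na ?ng expr1n.
move=> /(_ e1 e2 ia ig g1 ag) [h1 h2].
split.
  have -> : 'Re a * - 'Im g + 'Re g * 'Im a = 'Im a * 'Re g - 'Re a * 'Im g by ring.
  exact: h1.
have -> : 'Re a * 'Re g - 'Im a * - 'Im g = 'Re a * 'Re g + 'Im a * 'Im g by ring.
exact: h2.
Qed.

Lemma unit_of_root (z : algC) N : (0 < N)%N -> z ^+ N = 1 -> `|z| = 1.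
Proof.
move=> hN hz; apply/eqP; rewrite -(pexpr_eq1 hN) ?normr_ge0 //.
by rewrite -normrX hz normr1.
Qed.

Lemma unit_conj (z : algC) : `|z| = 1 -> z * z^* = 1.
Proof. by move=> h; rewrite -normCK h expr1n. Qed.

Lemma unit_ReIm (z : algC) : `|z| = 1 -> 'Re z ^+ 2 + 'Im z ^+ 2 = 1.
Proof. by move=> h; rewrite -normC2_Re_Im h expr1n. Qed.

Lemma real_aux (R : realFieldType) (x y : R) : x^+2 + y^+2 = 1 -> ~ (x < 1) -> x = 1 /\ y = 0.
Proof.
move=> e h.
have hx : 1 <= x by rewrite leNgt; apply/negP.
have hy : y ^+ 2 = 0 by nra.
split; last by apply/eqP; rewrite -sqrf_eq0 hy.
nra.
Qed.

Lemma Re_lt1 (g : algC) : `|g| = 1 -> g != 1 -> 'Re g < 1.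
Proof.
move=> ng g1.
have rR := Creal_Re g.
case: (boolP ('Re g < 1)) => // /negP hn.
pose x := in_algR (Creal_Re g). pose y := in_algR (Creal_Im g).
have e : x ^+ 2 + y ^+ 2 = 1.
  by apply: val_inj; rewrite /= -!expr2 unit_ReIm.
have [hx hy] := @real_aux _ x y e hn.
move: g1; rewrite [g]Crect.
have -> : 'Re g = 1 by move/(congr1 val): hx.
have -> : 'Im g = 0 by move/(congr1 val): hy.
by rewrite mulr0 addr0 eqxx.
Qed.

Section Prim.
Variable m : nat.
Hypothesis m_gt0 : (0 < m)%N.
Let y : algC := m.-root (-1).
Let N := (2 * m)%N.
Let N_gt0 : (0 < N)%N. Proof. by rewrite /N muln_gt0. Qed.

Let ym : y ^+ m = -1. Proof. exact: rootCK. Qed.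
Let yN : y ^+ N = 1. Proof. by rewrite /N mulnC exprM ym sqrrN expr1n. Qed.
Let ny : `|y| = 1. Proof. exact: unit_of_root N_gt0 yN. Qed.
Let Imy : 0 <= 'Im y.
Proof.
rewrite /y; case: (ltnP 1 m) => [h|h]; first exact: Im_rootC_ge0.
have -> : m = 1%N by apply/eqP; rewrite eqn_leq h m_gt0.
by rewrite root1C (Creal_ImP _ _) ?rpredN1.
Qed.
Let y1 : y != 1.
Proof.
apply/eqP => e; move: ym; rewrite e expr1n => /eqP.
by rewrite -subr_eq0 opprK (pnatr_eq0 _ 2).
Qed.
Let Rey : 'Re y < 1. Proof. exact: Re_lt1. Qed.

Let maxT z : z ^+ m = -1 -> 0 <= 'Im z -> 'Re z <= 'Re y.
Proof. by move=> h1 h2; apply: rootC_Re_max. Qed.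

Let maxS z : z ^+ N = 1 -> 0 <= 'Im z -> z != 1 -> 'Re z <= 'Re y.
Proof.
move=> zN zI z1.
have : (z ^+ m) ^+ 2 == 1 by rewrite -exprM mulnC zN.
rewrite sqrf_eq1 => /orP[/eqP zm|/eqP zm]; last exact: maxT.
have nz : `|z| = 1 := unit_of_root N_gt0 zN.
rewrite real_leNgt ?Creal_Re //; apply/negP => lt.
have [h1 h2] := D_C ny nz Imy zI (Re_lt1 nz z1) (ltW lt).
have : (y * z^*) ^+ m = -1 by rewrite exprMn -rmorphXn zm rmorph1 mulr1 ym.
by move/maxT/(_ h1) => hle; have := lt_le_trans h2 hle; rewrite ltxx.
Qed.

Let descent z : z ^+ N = 1 -> 0 <= 'Im z -> exists i, z = y ^+ i.
Proof.
have [h hprim] := C_prim_root_exists N_gt0.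
pose ms (z : algC) := #|[set i : 'I_N | 'Re z < 'Re (h ^+ i)]|.
have step : forall z, z ^+ N = 1 -> 0 <= 'Im z -> z != 1 ->
    exists w, [/\ w ^+ N = 1, 0 <= 'Im w, (ms w < ms z)%N & z = w * y].
  move=> z0 zN zI z1.
  have nz := unit_of_root N_gt0 zN.
  have [h1 h2] := D_C nz ny zI Imy Rey (maxS zN zI z1).
  exists (z0 * y^*); split => //.
  - by rewrite exprMn -rmorphXn yN rmorph1 mulr1 zN.
  - apply: proper_card; apply/properP; split.
      by apply/subsetP => i; rewrite !inE => hi; exact: lt_trans h2 hi.
    have wN : (z0 * y^*) ^+ N = 1 by rewrite exprMn -rmorphXn yN rmorph1 mulr1 zN.
    have [i0 hi0] := prim_rootP hprim wN.
    by exists i0; rewrite !inE -hi0 ?ltxx.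
  - by rewrite -mulrA (mulrC _ y) unit_conj // mulr1.
move: {2}(ms z) (leqnn (ms z)) => k; elim: k z => [|k IH] z0 hk zN zI.
  case: (eqVneq z0 1) => [->|z1]; first by exists 0%N; rewrite expr0.
  have [w [_ _ hw _]] := step z0 zN zI z1.
  by move: (leq_trans hw hk).
case: (eqVneq z0 1) => [->|z1]; first by exists 0%N; rewrite expr0.
have [w [wN wI hw ->]] := step z0 zN zI z1.
have [i ->] := IH w (leq_trans hw hk) wN wI.
by exists i.+1; rewrite exprSr.
Qed.

Lemma prim_y : N.-primitive_root y.
Proof.
have [h hprim] := C_prim_root_exists N_gt0.
have [j hj] : exists j, h = y ^+ j.
  have hN := prim_expr_order hprim.
  case: (real_ge0P (Creal_Im h)) => [hI|hI]; first exact: descent.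
  have hcN : (h^*) ^+ N = 1 by rewrite -rmorphXn hN rmorph1.
  have hI' : 0 <= 'Im h^* by rewrite Im_conj oppr_ge0 ltW.
  have [i hi] := descent hcN hI'.
  exists ((N.-1) * i)%N.
  have yc : y^* = y ^+ N.-1.
    apply: (mulfI (x:=y)); first by rewrite -normr_eq0 ny oner_eq0.
    by rewrite unit_conj // -exprS prednK.
  rewrite -[h]conjCK hi rmorphXn; apply: (etrans (y := y^* ^+ i)) => //.
  by rewrite yc -exprM mulnC.
have [k pk kN] := prim_order_exists N_gt0 yN.
suff e : N = k by rewrite e.
apply/eqP; rewrite eqn_dvd kN /=.
by rewrite andbT (prim_order_dvd hprim) hj -exprM mulnC exprM (prim_expr_order pk) expr1n.
Qed.

End Prim.



Lemma zeta_prim m : (0 < m)%N -> m.-primitive_root (zeta m).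
Proof.
move=> hm; have := dvdn_prim_root (prim_y hm) (dvdn_mull 2 (dvdnn m)).
by rewrite mulnK.
Qed.

Lemma geom (u : algC) n : (0 < n)%N -> u ^+ n = 1 ->
  \sum_(b <- iota 0 n) u ^+ b = (u == 1)%:R * n%:R.
Proof.
move=> hn hu.
have -> : \sum_(b <- iota 0 n) u ^+ b = \sum_(b < n) u ^+ b.
  by rewrite -(big_mkord xpredT) /index_iota subn0.
case: (eqVneq u 1) => [->|u1].
  by rewrite (eq_bigr (fun=> 1)) => [|i _]; rewrite ?expr1n // sumr_const card_ord mul1r.
rewrite mul0r; have := subrX1 u n; rewrite hu subrr => /esym/eqP.
by rewrite mulf_eq0 subr_eq0 (negbTE u1) => /eqP.
Qed.

Definition P m := [seq zeta m ^+ j | j <- [seq j <- index_iota 1 m.+1 | coprime j m]].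
Definition U n := [seq zeta n ^+ b | b <- iota 0 n].

Lemma ram_P m (x : nat) : ramanujan m x%:Z = \sum_(r <- P m) r ^+ x.
Proof.
rewrite /ramanujan /P big_map big_filter; apply: eq_bigr => j _.
by rewrite -PoszM -exprM.
Qed.

Lemma prim_uniq e e' (z : algC) : e.-primitive_root z -> e'.-primitive_root z -> e = e'.
Proof.
move=> p p'; apply/eqP; rewrite eqn_dvd.
by rewrite (prim_order_dvd p) (prim_expr_order p') (prim_order_dvd p') (prim_expr_order p) eqxx.
Qed.

Lemma mem_P m z : (0 < m)%N -> (z \in P m) = m.-primitive_root z.
Proof.
move=> hm; have pz := zeta_prim hm.
apply/mapP/idP => [[j] | hz].
  by rewrite mem_filter => /andP[cj _] ->; rewrite prim_root_exp_coprime.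
have [i hi] := prim_rootP pz (prim_expr_order hz).
case: (posnP i) => [i0|ip].
  exists m; last by rewrite (prim_expr_order pz) hi i0 expr0.
  rewrite mem_filter mem_index_iota hm ltnSn andbT.
  have : m.-primitive_root (zeta m ^+ 0) by rewrite -i0 -hi.
  by rewrite (prim_root_exp_coprime _ pz) andbT /coprime gcd0n gcdnn.
exists (nat_of_ord i) => //; rewrite mem_filter mem_index_iota ip ltnS (ltnW (ltn_ord i)) andbT.
by apply/andP; split => //; rewrite -(prim_root_exp_coprime _ pz) -hi.
Qed.

Lemma uniq_P m : (0 < m)%N -> uniq (P m).
Proof.
move=> hm; have pz := zeta_prim hm.
rewrite map_inj_in_uniq ?filter_uniq ?iota_uniq // => i j.
rewrite !mem_filter !mem_index_iota => /andP[_ /andP[i1 im]] /andP[_ /andP[j1 jm]] /eqP.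
rewrite (eq_prim_root_expr pz) => /eqP e.
case: (ltnP i m) => ci; case: (ltnP j m) => cj.
- by move: e; rewrite !modn_small.
- have jm' : j = m by apply/eqP; rewrite eqn_leq cj -ltnS jm.
  by move: e; rewrite jm' modnn modn_small // => i0; move: i1; rewrite i0.
- have im' : i = m by apply/eqP; rewrite eqn_leq ci -ltnS im.
  by move: e; rewrite im' modnn modn_small // => j0; move: j1; rewrite -j0.
- have im' : i = m by apply/eqP; rewrite eqn_leq ci -ltnS im.
  have jm' : j = m by apply/eqP; rewrite eqn_leq cj -ltnS jm.
  by rewrite im' jm'.
Qed.

Lemma uniq_U n : (0 < n)%N -> uniq (U n).
Proof.
move=> hn; have pw := zeta_prim hn.
rewrite map_inj_in_uniq ?iota_uniq // => i j; rewrite !mem_iota !add0n => hi hj /eqP.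
by rewrite (eq_prim_root_expr pw) !modn_small // => /eqP.
Qed.

Lemma mem_U n z : (0 < n)%N -> z ^+ n = 1 -> z \in U n.
Proof.
move=> hn hz; have pw := zeta_prim hn.
have [i ->] := prim_rootP pw hz.
by apply/mapP; exists (nat_of_ord i); rewrite // mem_iota add0n ltn_ord.
Qed.

Lemma sum_div n (F : nat -> algC -> algC) : (0 < n)%N ->
  \sum_(e <- divisors n) \sum_(r <- P e) F e r =
  \sum_(b <- iota 0 n) F (n %/ gcdn b n)%N (zeta n ^+ b).
Proof.
move=> hn; have pw := zeta_prim hn.
rewrite (eq_big_seq (fun e => \sum_(z <- U n | e.-primitive_root z) F e z)); last first.
  move=> e; rewrite -dvdn_divisors // => he.
  have e0 : (0 < e)%N by apply: dvdn_gt0 he.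
  rewrite -[in RHS]big_filter; apply/perm_big/uniq_perm.
  - exact: uniq_P.
  - by rewrite filter_uniq // uniq_U.
  move=> z; rewrite mem_P // mem_filter.
  case hz: (e.-primitive_root z) => //=; apply/esym/mem_U => //.
  by apply/eqP; rewrite -(prim_order_dvd hz).
rewrite (exchange_big_dep xpredT) //= /U big_map; apply: eq_big_seq => b _.
set e0 := (n %/ gcdn b n)%N.
have pe0 : e0.-primitive_root (zeta n ^+ b) by exact: exp_prim_root.
rewrite (eq_bigl (pred1 e0)); last first.
  move=> e /=; apply/idP/eqP => [h|->//]; exact: prim_uniq h pe0.
rewrite -big_filter filter_pred1_uniq ?big_seq1 ?divisors_uniq //.
by rewrite -dvdn_divisors // dvdn_div // dvdn_gcdr.
Qed.

Lemma sum_ram d x : (0 < d)%N ->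
  \sum_(e <- divisors d) ramanujan e x%:Z = (d %| x)%:R * d%:R.
Proof.
move=> hd; have pw := zeta_prim hd.
rewrite (eq_bigr (fun e => \sum_(r <- P e) r ^+ x)); last by move=> e _; rewrite ram_P.
have := sum_div (fun _ r => r ^+ x) hd; rewrite /= => ->.
rewrite (eq_bigr (fun b => (zeta d ^+ x) ^+ b)); last by move=> b _; rewrite exprAC.
rewrite geom //; last by rewrite exprAC (prim_expr_order pw) expr1n.
by rewrite -(prim_order_dvd pw).
Qed.

Lemma ram_gcd d : (0 < d)%N -> forall x x', gcdn x d = gcdn x' d ->
  ramanujan d x%:Z = ramanujan d x'%:Z.
Proof.
elim/ltn_ind: d => d IH hd x x' hg.
have key y : ramanujan d y%:Z =
    (d %| y)%:R * d%:R - \sum_(e <- divisors d | e != d) ramanujan e y%:Z.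
  by rewrite -(sum_ram y hd) (bigD1_seq d) ?divisors_id ?divisors_uniq //= addrK.
have hdv (y : nat) : (d %| y)%N = (d %| gcdn y d)%N by rewrite dvdn_gcd dvdnn andbT.
suff hs : \sum_(e <- divisors d | e != d) ramanujan e x%:Z =
    \sum_(e <- divisors d | e != d) ramanujan e x'%:Z.
  by rewrite !key (hdv x) hg -(hdv x') hs.
rewrite big_seq_cond [RHS]big_seq_cond; apply: eq_bigr => e /andP[he ne].
move: he; rewrite -dvdn_divisors // => he.
have e0 : (0 < e)%N by apply: dvdn_gt0 he.
have lt : (e < d)%N by rewrite ltn_neqAle ne dvdn_leq.
apply: IH => //.
have hge (y : nat) : gcdn y e = gcdn (gcdn y d) e.
  by rewrite -gcdnA; congr gcdn; apply/esym/gcdn_idPr.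
by rewrite hge hg -hge.
Qed.


Lemma per_d n d : (0 < n)%N -> (d %| n)%N ->
  \sum_(d' <- divisors n) ramanujan d (n %/ d')%:Z * ramanujan d' (n %/ d)%:Z = n%:R.
Proof.
move=> hn hdn; have pw := zeta_prim hn.
have hd : (0 < d)%N by apply: dvdn_gt0 hdn.
rewrite (eq_bigr (fun d' => \sum_(r <- P d') ramanujan d (n %/ d')%:Z * r ^+ (n %/ d)));
  last by move=> d' _; rewrite (ram_P d') big_distrr.
have := sum_div (fun e r => ramanujan d (n %/ e)%:Z * r ^+ (n %/ d)) hn; rewrite /= => ->.
set v := zeta n ^+ (n %/ d).
have pv : d.-primitive_root v by exact: dvdn_prim_root.
rewrite (eq_bigr (fun b => \sum_(r <- P d) (r * v) ^+ b)); last first.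
  move=> b _; rewrite divnA ?dvdn_gcdr // mulKn //.
  rewrite (@ram_gcd d hd (gcdn b n) b); last by rewrite -gcdnA (gcdn_idPr hdn).
  rewrite ram_P big_distrl; apply: eq_bigr => r _.
  by rewrite [RHS]exprMn /v -!exprM [(_ * b)%N]mulnC.
rewrite exchange_big /=.
have vn0 : v != 0 by rewrite (prim_root_eq0 pv) -lt0n.
rewrite big_seq (eq_bigr (fun r => if r == v^-1 then n%:R else 0)); last first.
  move=> r hr; rewrite geom //; last first.
    have pr : d.-primitive_root r by rewrite -mem_P.
    have rn (z : algC) : d.-primitive_root z -> z ^+ n = 1.
      by move=> pz; rewrite -(divnK hdn) mulnC exprM (prim_expr_order pz) expr1n.
    by rewrite exprMn (rn _ pr) (rn _ pv) mulr1.
  have -> : (r * v == 1) = (r == v^-1).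
    apply/eqP/eqP => [h|->]; last by rewrite mulVf.
    by rewrite -[r]mulr1 -(mulfV vn0) mulrA h mul1r.
  by case: (r == v^-1); rewrite ?mul1r ?mul0r.
rewrite -big_seq -big_mkcond /= -big_filter filter_pred1_uniq ?big_seq1 ?uniq_P //.
rewrite mem_P //.
have -> : v^-1 = v ^+ d.-1.
  apply: (mulfI vn0); rewrite mulfV // -exprS prednK //.
  by rewrite (prim_expr_order pv).
by rewrite (prim_root_exp_coprime _ pv) coprimePn.
Qed.

Theorem mainTheorem4 (n : nat) (hn : (1 <= n)%N) :
  \sum_(d <- divisors n) \sum_(d' <- divisors n)
     ramanujan d (n %/ d')%:Z * ramanujan d' (n %/ d)%:Z
  = (n * tau n)%:R.
Proof.
rewrite (eq_big_seq (fun _ => n%:R)); last first.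
  by move=> d; rewrite -dvdn_divisors // => hd; apply: per_d.
rewrite big_const_seq count_predT /tau natrM mulrC -mulr_natl.
elim: (size _) => [|k IH] /=; first by rewrite mul0r.
by rewrite IH -addn1 natrD mulrDl mul1r addrC.
Qed.
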